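(* For all constants $c', c_{11}>0$ there exist positive constants $c_1, c_2, c_3$ (depending only on $c', c_{11}$, not on $M,\varepsilon$) such that the following holds. Let $\varepsilon>0$ and $M \ge \frac{1}{\varepsilon}$, and let $\Phi_1,\Phi_2,\dots$ be i.i.d. nonnegative random variables with \[ \mathbb{P}(\Phi_1>z)\leq \exp(-c'M^{3/2}\sqrt{z})\quad \text{for all } z\geq 4\varepsilon^2/M, \] and $\mathbb{E}(\Phi_1)\leq c_{11}\varepsilon^2/M$. Then for all $n \ge c_3\varepsilon M$, \[ \mathbb{P}\Big(\sum_{i=1}^n\Phi_i\geq 4c_{11}n\frac{\varepsilon^2}{M}\Big)\leq \Big(1 + \frac{c_1}{n^{2/5}\left(\varepsilon M\right)^{8/5}}\Big)\exp\Big(-c_2 (\varepsilon M)^{4/5}n^{1/5}\Big). \] *)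

(* Defs.v *)
From HB Require Import structures.
From mathcomp Require Import all_boot all_order all_algebra.
From mathcomp Require Import all_classical all_reals all_analysis.
Set Implicit Arguments. Unset Strict Implicit. Unset Printing Implicit Defensive.
Import Order.TTheory GRing.Theory Num.Theory.
Local Open Scope classical_set_scope.
Local Open Scope ring_scope.

Definition mutually_independent {d} {T : measurableType d} {R : realType}
  (P : probability T R) (X : nat -> T -> R) : Prop :=
  forall (I : seq nat) (A : nat -> set R), uniq I ->
    (forall i, measurable (A i)) ->
    P (\big[setI/setT]_(i <- I) (X i @^-1` A i)) =
    (\prod_(i <- I) P (X i @^-1` A i))%E.

Definition identically_distributed {d} {T : measurableType d} {R : realType}
  (P : probability T R) (X : nat -> T -> R) : Prop :=
  forall (i : nat) (A : set R), measurable A ->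
    P (X i @^-1` A) = P (X 0%N @^-1` A).

(* i.i.d. sequence of real random variables (indices 0,1,2,... play the role
   of Phi_1, Phi_2, ...). *)
Definition iid {d} {T : measurableType d} {R : realType}
  (P : probability T R) (X : nat -> T -> R) : Prop :=
  [/\ forall i, measurable_fun setT (X i),
      mutually_independent P X & identically_distributed P X].

(* Main.v *)
Require Import Defs.
From HB Require Import structures.
From mathcomp Require Import all_boot all_order all_algebra.
From mathcomp Require Import all_classical all_reals all_analysis.
From mathcomp Require Import lra ring measurable_realfun.
Import Order.TTheory GRing.Theory Num.Theory.
Local Open Scope classical_set_scope.
Local Open Scope ring_scope.



Lemma mbigU d (T : measurableType d) (I : Type) (s : seq I) (F : I -> set T) :
  (forall i, measurable (F i)) -> measurable (\big[setU/set0]_(i <- s) F i).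
Proof.
move=> mF; elim: s => [|a s IH]; first by rewrite big_nil.
by rewrite big_cons; apply: measurableU.
Qed.

Lemma mbigI d (T : measurableType d) (I : Type) (s : seq I) (F : I -> set T) :
  (forall i, measurable (F i)) -> measurable (\big[setI/setT]_(i <- s) F i).
Proof.
move=> mF; elim: s => [|a s IH]; first by rewrite big_nil.
by rewrite big_cons; apply: measurableI.
Qed.

Lemma union_bound d (T : measurableType d) (R : realType) (P : probability T R)
  (I : Type) (s : seq I) (F : I -> set T) :
  (forall i, measurable (F i)) ->
  (P (\big[setU/set0]_(i <- s) F i) <= \sum_(i <- s) P (F i))%E.
Proof.
move=> mF; elim: s => [|a s IH]; first by rewrite !big_nil measure0.
rewrite !big_cons; apply: le_trans (measureU2 _ _ _) _ => //.
  exact: mbigU.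
by apply: leeD2l.
Qed.

Lemma bigIP (T : Type) (s : seq nat) (F : nat -> set T) x :
  (\big[setI/setT]_(i <- s) F i) x <-> (forall i, i \in s -> F i x).
Proof.
elim: s => [|a s IH]; first by rewrite big_nil; split => // _ i.
rewrite big_cons; split.
  move=> [Fa /IH Fs] i; rewrite in_cons => /orP[/eqP->//|]; exact: Fs.
move=> H; split; first by apply: H; rewrite mem_head.
by apply/IH => i si; apply: H; rewrite in_cons si orbT.
Qed.

Lemma expR_le12 (R : realType) (x : R) : 0 <= x -> x <= 1/2 -> expR x <= 1 + 2 * x.
Proof.
move=> x0 x1.
have h1 := expR_ge1Dx (- x).
rewrite expRN in h1.
have e0 := expR_gt0 x.
have h2 : (1 - x) * expR x <= 1.
  by have := ler_wpM2r (ltW e0) h1; rewrite mulVf ?gt_eqF.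
have h3 : 0 <= (1 - (1 - x) * expR x) * (1 + 2 * x).
  apply: mulr_ge0. rewrite subr_ge0. exact: h2. lra.
have h4 : 0 <= expR x * (x * (1 - 2 * x)) by apply: mulr_ge0; [lra| apply: mulr_ge0; lra].
nra.
Qed.

Lemma cell_unique (R : realType) (h : R) (y : R) (j k : nat) : 0 < h ->
  y \in `]((j%:R - 1) * h), (j%:R * h)] -> y \in `]((k%:R - 1) * h), (k%:R * h)] -> j = k.
Proof.
move=> h0; rewrite !in_itv /= => /andP[a b] /andP[c e].
have jk : j%:R < k%:R + 1 :> R.
  have := lt_le_trans a e; rewrite ltr_pM2r // => H; lra.
have kj : k%:R < j%:R + 1 :> R.
  have := lt_le_trans c b; rewrite ltr_pM2r // => H; lra.
apply/eqP; rewrite eqn_leq; apply/andP; split.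
  by rewrite -ltnS -(ltr_nat R) -natr1.
by rewrite -ltnS -(ltr_nat R) -natr1.
Qed.

Lemma cell_exists (R : realType) (h : R) (y : R) (N : nat) : 0 < h ->
  0 <= y -> y <= N%:R * h -> exists k : 'I_N.+1, y \in `]((k%:R - 1) * h), (k%:R * h)].
Proof.
move=> h0 y0; elim: N => [|N IH] yN.
  exists ord0; rewrite in_itv /=; apply/andP; split; nra.
have [yl|yg] := leP y (N%:R * h).
  have [k hk] := IH yl; exists (widen_ord (leqnSn _) k); done.
exists ord_max; rewrite in_itv /= -natr1; apply/andP; split; nra.
Qed.
Arguments bigIP {T s F x}.
Arguments union_bound {d T R} P {I s F}.



Definition cell {R : realType} (h : R) (k : nat) : set R :=
  [set` `]((k%:R - 1) * h), (k%:R * h)]].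

Lemma bigUP (T : Type) (I : eqType) (s : seq I) (F : I -> set T) x :
  (\big[setU/set0]_(i <- s) F i) x <-> (exists i, i \in s /\ F i x).
Proof.
elim: s => [|a s IH]; first by rewrite big_nil; split => // -[i []].
rewrite big_cons; split.
  move=> [Fa|/IH [i [si Fi]]]; first by exists a; rewrite mem_head.
  by exists i; rewrite in_cons si orbT.
move=> [i []]; rewrite in_cons => /orP[/eqP -> Fa|si Fi]; first by left.
by right; apply/IH; exists i.
Qed.

Arguments bigUP {T I s F x}.

Lemma msum_ge d (T : measurableType d) (R : realType) (Y : nat -> T -> R) (n : nat) (S : R) :
  (forall i, measurable_fun setT (Y i)) ->
  measurable [set x | S <= \sum_(i < n) Y i x].
Proof.
move=> mY.
have mf : measurable_fun setT (fun x => \sum_(i < n) Y i x).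
  by apply: measurable_sum => i; exact: mY.
have := mf measurableT _ (measurable_itv `[S, +oo[); rewrite setTI.
suff -> : [set x | S <= \sum_(i < n) Y i x] =
  (fun x => \sum_(i < n) Y i x) @^-1` [set` `[S, +oo[] by [].
by apply/seteqP; split => x /=; rewrite in_itv /= andbT.
Qed.

Lemma chernoff_disc d (T : measurableType d) (R : realType) (P : probability T R)
  (Y : nat -> T -> R) (n N : nat) (h S t : R) :
  iid P Y -> (forall i x, 0 <= Y i x) -> 0 < h -> 0 <= t ->
  (P ([set x | S <= \sum_(i < n) Y i x] `&`
      \big[setI/setT]_(j <- index_iota 0 n) (Y j @^-1` [set` `]-oo, N%:R * h]]))%R
   <= (expR (- (t * S)) *
       (\sum_(k < N.+1) fine (P (Y 0%N @^-1` cell h k)) * expR (t * (k%:R * h))) ^+ n)%:E)%E.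
Proof.
move=> [mY indep ident] Y0 h0 t0.
set p := fun k : nat => fine (P (Y 0%N @^-1` cell h k)).
have mY' : forall i B, measurable B -> measurable (Y i @^-1` B).
  by move=> i B mB; have := mY i measurableT _ mB; rewrite setTI.
have p0 : forall k, 0 <= p k by move=> k; apply: fine_ge0; exact: measure_ge0.
pose A' (f : {ffun 'I_n -> 'I_N.+1}) (j : nat) : set R :=
  if (insub j : option 'I_n) is Some i then cell h (f i) else setT.
pose Ef f := \big[setI/setT]_(j <- index_iota 0 n) (Y j @^-1` A' f j).
pose good (f : {ffun 'I_n -> 'I_N.+1}) := (S <= \sum_(i < n) (f i)%:R * h).
have mA' : forall f j, measurable (A' f j).
  by move=> f j; rewrite /A'; case: (insub j) => [i|] //; exact: measurable_itv.
have mEf : forall f, measurable (Ef f) by move=> f; apply: mbigI => j; exact: mY'.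
have PEf : forall f, P (Ef f) = (\prod_(i < n) p (f i))%:E.
  move=> f; rewrite /Ef indep //; last exact: iota_uniq.
  rewrite big_mkord -prodEFin; apply: eq_bigr => i _.
  rewrite /A' valK ident; last exact: measurable_itv.
  rewrite /p fineK //; apply: fin_num_measure; apply: mY'; exact: measurable_itv.
have mL : measurable ([set x | S <= \sum_(i < n) Y i x] `&`
      \big[setI/setT]_(j <- index_iota 0 n) (Y j @^-1` [set` `]-oo, N%:R * h]])).
  apply: measurableI; first exact: msum_ge.
  by apply: mbigI => j; apply: mY'; exact: measurable_itv.
have sub : ([set x | S <= \sum_(i < n) Y i x] `&`
      \big[setI/setT]_(j <- index_iota 0 n) (Y j @^-1` [set` `]-oo, N%:R * h]]))
   `<=` \big[setU/set0]_(f <- [seq f <- index_enum {ffun 'I_n -> 'I_N.+1} | good f]) Ef f.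
  move=> x [/= Sx /bigIP Gx].
  have ex : forall i : 'I_n, exists k : 'I_N.+1, cell h k (Y i x).
    move=> i; apply: cell_exists => //.
    have := Gx i; rewrite mem_index_iota /= => /(_ (ltn_ord i)).
    by rewrite in_itv /=.
  have [f0 hf0] := choice ex.
  apply/bigUP; exists (finfun f0); split.
    rewrite mem_filter mem_index_enum andbT /good.
    apply: (le_trans Sx); apply: ler_sum => i _; rewrite ffunE.
    by have := hf0 i; rewrite /cell /= in_itv /= => /andP[].
  apply/bigIP => j _ /=; rewrite /A'; case: insubP => [i _ <-|] //=.
  by rewrite ffunE; exact: hf0.
apply: le_trans (le_measure _ _ _ sub) _; rewrite ?inE //.
  by apply: mbigU => f; exact: mEf.
apply: le_trans (union_bound P _) _ => //.
rewrite big_filter.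
under eq_bigr do rewrite PEf.
rewrite sumEFin lee_fin.
pose g k := p k * expR (t * (k%:R * h)).
apply: (@le_trans _ _ (\sum_(f : {ffun 'I_n -> 'I_N.+1}) expR (- (t * S)) * \prod_(i < n) g (f i))).
  rewrite big_mkcond /=; apply: ler_sum => f _; case: ifP => gf; last first.
    by apply: mulr_ge0; [exact: expR_ge0| apply: prodr_ge0 => i _; apply: mulr_ge0 => //; exact: expR_ge0].
  rewrite /g big_split /= -expR_sum mulrCA -expRD ler_peMr //.
    by apply: prodr_ge0 => i _.
  rewrite -[X in X <= _]expR0 ler_expR -mulr_sumr addrC -mulrBr; apply: mulr_ge0 => //.
  by rewrite subr_ge0; move: gf; rewrite /good.
rewrite -mulr_sumr; apply: ler_wpM2l; first exact: expR_ge0.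
rewrite -(bigA_distr_bigA (fun (i : 'I_n) (k : 'I_N.+1) => g k)) /= prodr_const card_ord.
by [].
Qed.



Lemma pw_bound (T : Type) (R : realType) (K : nat) (c : nat -> R) (U : nat -> set T) (x : T) (B : R) :
  (forall j k, U j x -> U k x -> j = k) -> (forall k, U k x -> c k <= B) -> 0 <= B ->
  \sum_(k < K) c k * \1_(U k) x <= B.
Proof.
move=> uniq cB B0.
have [[j Uj]|nU] := pselect (exists k : 'I_K, U k x).
  rewrite (bigD1 j) //= big1 => [|k kj].
    by rewrite indicE mem_set // mulr1 addr0; exact: cB.
  rewrite indicE memNset ?mulr0 // => Uk.
  by move/negP: kj; apply; apply/eqP/val_inj; exact: (uniq _ _ Uk Uj).
rewrite big1 // => k _; rewrite indicE memNset ?mulr0 // => Uk; apply: nU; by exists k.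
Qed.

Lemma mgf_bound d (T : measurableType d) (R : realType) (P : probability T R)
  (Y : nat -> T -> R) (N : nat) (h t m : R) :
  iid P Y -> (forall i x, 0 <= Y i x) -> 0 < h -> 0 <= t ->
  t * (N%:R * h) <= 1/2 -> ('E_P[Y 0%N] <= m%:E)%E ->
  \sum_(k < N.+1) fine (P (Y 0%N @^-1` cell h k)) * expR (t * (k%:R * h))
    <= 1 + 2 * t * (h + m).
Proof.
move=> [mY indep ident] Y0 h0 t0 tN Em.
set U := fun k : nat => Y 0%N @^-1` cell h k.
have mY' : forall i B, measurable B -> measurable (Y i @^-1` B).
  by move=> i B mB; have := mY i measurableT _ mB; rewrite setTI.
have mU : forall k, measurable (U k) by move=> k; apply: mY'; exact: measurable_itv.
set p := fun k : nat => fine (P (U k)).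
have p0 : forall k, 0 <= p k by move=> k; apply: fine_ge0; exact: measure_ge0.
pose c := fun k : nat => 1 + 2 * t * (k%:R * h).
have c0 : forall k, 0 <= c k.
  move=> k; rewrite /c.
  have : 0 <= t * (k%:R * h) by apply: mulr_ge0 => //; apply: mulr_ge0 => //; exact: ltW.
  lra.
apply: (@le_trans _ _ (\sum_(k < N.+1) c k * p k)).
  apply: ler_sum => k _; rewrite mulrC; apply: ler_wpM2r; first exact: p0.
  have -> : c k = 1 + 2 * (t * (k%:R * h)) by rewrite /c !mulrA.
  apply: expR_le12.
    by apply: mulr_ge0 => //; apply: mulr_ge0 => //; exact: ltW.
  apply: le_trans tN; apply: ler_wpM2l => //; apply: ler_wpM2r; first exact: ltW.
  by rewrite ler_nat -ltnS.
rewrite -lee_fin -sumEFin.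
have eq1 : forall k, ((c k * p k)%:E = \int[P]_x ((c k * \1_(U k) x)%:E))%E.
  move=> k.
  under eq_integral do rewrite EFinM.
  rewrite ge0_integralZl //.
  - by rewrite integral_indic // setIT /p EFinM fineK //; apply: fin_num_measure.
  - by apply/measurable_EFinP; exact: measurable_indic.
  - by rewrite lee_fin; exact: c0.
under eq_bigr do rewrite eq1.
rewrite -ge0_integral_sum //; first last.
  - by move=> k x _; rewrite lee_fin; apply: mulr_ge0 => //; rewrite indicE.
  - move=> k; apply/measurable_EFinP; apply: measurable_funM; first exact: measurable_cst.
    exact: measurable_indic.
apply: (@le_trans _ _ (\int[P]_x ((1 + 2 * t * h)%:E + (2 * t)%:E * (Y 0%N x)%:E))%E).
  apply: ge0_le_integral => //.
  - by move=> x _; apply: sume_ge0 => k _; rewrite lee_fin; apply: mulr_ge0 => //; rewrite indicE.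
  - apply: emeasurable_sum => k; apply/measurable_EFinP; apply: measurable_funM; first exact: measurable_cst.
    exact: measurable_indic.
  - apply: emeasurable_funD; first exact: measurable_cst.
    apply: emeasurable_funM; first exact: measurable_cst.
    by apply/measurable_EFinP; exact: mY.
  move=> x _; rewrite sumEFin -EFinM -EFinD lee_fin.
  apply: pw_bound.
  - move=> j k; exact: cell_unique.
  - move=> k; rewrite /U /cell /= in_itv /= => /andP[lo _].
    rewrite /c; have : k%:R * h < Y 0%N x + h by nra.
    move=> H; have : t * (k%:R * h) <= t * (Y 0%N x + h) by apply: ler_wpM2l => //; exact: ltW.
    nra.
  - have := Y0 0%N x; nra.
have th : 0 <= t * h by apply: mulr_ge0 => //; exact: ltW.
rewrite ge0_integralD //; [|move=> x _; rewrite lee_fin; lra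
  | by move=> x _; rewrite -EFinM lee_fin; apply: mulr_ge0 => //; lra
  | apply: emeasurable_funM; [exact: measurable_cst | by apply/measurable_EFinP; exact: mY]].
rewrite integral_cst //.
rewrite [X in ((_ * X) + _)%E](_ : _ = 1%E); last exact: probability_setT.
rewrite mule1.
rewrite ge0_integralZl //; first last.
  - by rewrite lee_fin; lra.
  - by move=> x _; rewrite lee_fin.
  - by apply/measurable_EFinP; exact: mY.
have -> : (\int[P]_x (Y 0%N x)%:E = 'E_P[Y 0%N])%E by rewrite unlock.
apply: (@le_trans _ _ ((1 + 2 * t * h)%:E + (2 * t)%:E * m%:E)%E).
  by apply: leeD2l; apply: lee_wpmul2l => //; rewrite lee_fin; lra.
by rewrite -EFinM -EFinD lee_fin; lra.
Qed.



Lemma powk (R : realType) (x : R) (k : nat) : 0 <= x ->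
  (x `^ (1/5)) ^+ k = x `^ (k%:R / 5).
Proof.
move=> x0; rewrite -powR_mulrn ?powR_ge0 // -powRrM; congr (_ `^ _).
by rewrite mulrC mulrA mulr1.
Qed.

Lemma arith (R : realType) (c' c11 : R) (hc' : 0 < c') (hc11 : 0 < c11)
  (u w K Nr : R) :
  4 <= K -> 6 <= c' * Num.sqrt (c11 / 2) * K -> 1 <= u -> K <= w ->
  w ^+ 4 <= Nr -> Nr <= w ^+ 4 + 1 ->
  expR (- ((w * u) ^+ 5 / Nr)) + (w * u) ^+ 5 * expR (- (c' * (u ^+ 5 * Num.sqrt (Nr * c11 / 2))))
    <= expR (- (1/4) * (u ^+ 4 * (w * u))).
Proof.
move=> K4 gK u1 Kw rlo rhi.
set g := c' * Num.sqrt (c11 / 2).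
have u0 : 0 < u by lra.
have w0 : 0 < w by lra.
have w1 : 1 <= w by lra.
have w4 := @ler_eXnr _ w 4 isT w1.
have w41 : 4 <= w ^+ 4 by lra.
have Nr0 : 0 < Nr by lra.
set X := u ^+ 4 * (w * u).
have u41 : 1 <= u ^+ 4 by exact: exprn_ege1.
have X0 : 0 <= X by rewrite /X; apply: mulr_ge0; [lra | apply: mulr_ge0; lra].
have X4 : 4 <= X.
  have : w * u <= X by rewrite /X ler_peMl //; apply: mulr_ge0; lra.
  have : w <= w * u by rewrite ler_peMr //; lra.
  lra.
have T1 : expR (- ((w * u) ^+ 5 / Nr)) <= expR (- (X / 2)).
  rewrite ler_expR lerN2 ler_pdivlMr //.
  have : X / 2 * Nr <= X / 2 * (2 * w ^+ 4) by apply: ler_wpM2l; lra.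
  suff -> : X / 2 * (2 * w ^+ 4) = (w * u) ^+ 5 by [].
  by rewrite /X; field.
have sq : g * w ^+ 2 <= c' * Num.sqrt (Nr * c11 / 2).
  rewrite /g -mulrA; apply: ler_wpM2l; first exact: ltW.
  have -> : Nr * c11 / 2 = (c11 / 2) * Nr by ring.
  rewrite (@sqrtrM _ (c11 / 2) Nr); last by lra.
  apply: ler_wpM2l; first exact: sqrtr_ge0.
  have -> : w ^+ 2 = Num.sqrt ((w ^+ 2) ^+ 2).
    by rewrite sqrtr_sqr ger0_norm // exprn_ge0 //; lra.
  by rewrite ler_wsqrtr // -exprM.
have B : g * (u ^+ 5 * w ^+ 2) <= c' * (u ^+ 5 * Num.sqrt (Nr * c11 / 2)).
  have -> : c' * (u ^+ 5 * Num.sqrt (Nr * c11 / 2)) = u ^+ 5 * (c' * Num.sqrt (Nr * c11 / 2)) by ring.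
  have -> : g * (u ^+ 5 * w ^+ 2) = u ^+ 5 * (g * w ^+ 2) by ring.
  by apply: ler_wpM2l => //; apply: exprn_ge0; lra.
have vexp : (w * u) ^+ 5 <= expR (5 * (w * u)).
  rewrite -[5]/(5%:R) expRM_natl lerXn2r // ?nnegrE ?expR_ge0 //; first by apply: mulr_ge0; lra.
  by have := expR_ge1Dx (w * u); lra.
have gw : 6 <= g * w by apply: le_trans gK _; apply: ler_wpM2l; [apply: mulr_ge0; [lra| apply: sqrtr_ge0]|].
set Q := u ^+ 5 * w.
have u5 : u <= u ^+ 5 := @ler_eXnr _ u 5 isT u1.
have Qwu : w * u <= Q by rewrite /Q mulrC; apply: ler_wpM2r; lra.
have QX : Q = X by rewrite /Q /X; ring.
have eB : g * (u ^+ 5 * w ^+ 2) = (g * w) * Q by rewrite /Q; ring.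
have hQ : 0 <= (g * w - 6) * Q by apply: mulr_ge0; lra.
have T2 : (w * u) ^+ 5 * expR (- (c' * (u ^+ 5 * Num.sqrt (Nr * c11 / 2)))) <= expR (- (X / 2)).
  apply: le_trans (ler_wpM2r (expR_ge0 _) vexp) _.
  rewrite -expRD ler_expR.
  lra.
have T3 : 2 <= expR (X / 4).
  by have := expR_ge1Dx (X / 4); lra.
have T4 : expR (- (X / 2)) * 2 <= expR (- (1/4) * X).
  have -> : - (1/4) * X = - (X/2) + X/4 by field.
  by rewrite expRD; apply: ler_wpM2l => //; exact: expR_ge0.
lra.
Qed.

Theorem lemmaA2 (R : realType) (c' c11 : R) (hc' : 0 < c') (hc11 : 0 < c11) :
  exists c1 c2 c3 : R, [/\ 0 < c1, 0 < c2 & 0 < c3] /\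
  forall (eps M : R), 0 < eps -> 1 / eps <= M ->
  forall (d : measure_display) (T : measurableType d) (P : probability T R)
         (Phi : nat -> T -> R),
    iid P Phi ->
    (forall i x, 0 <= Phi i x) ->
    (forall z : R, 4 * eps ^+ 2 / M <= z ->
       (P [set x | (z < Phi 0%N x)%R] <=
         (expR (- c' * M `^ (3 / 2) * Num.sqrt z)%R)%:E)%E) ->
    ('E_P[Phi 0%N] <= (c11 * eps ^+ 2 / M)%R%:E)%E ->
    forall n : nat, c3 * eps * M <= n%:R ->
      (P [set x | (4 * c11 * n%:R * (eps ^+ 2 / M) <= \sum_(i < n) Phi i x)%R]
       <= ((1 + c1 / (n%:R `^ (2 / 5) * (eps * M) `^ (8 / 5)))
           * expR (- c2 * (eps * M) `^ (4 / 5) * n%:R `^ (1 / 5)))%R%:E)%E.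
Proof.
set g := c' * Num.sqrt (c11 / 2).
have g0 : 0 < g by rewrite mulr_gt0 // sqrtr_gt0 divr_gt0.
set K := 4 + 6 / g + 8 / c11.
have e1 : g * (6 / g) = 6 by rewrite mulrC divfK // gt_eqF.
have e2 : c11 * (8 / c11) = 8 by rewrite mulrC divfK // gt_eqF.
have p1 : 0 <= 6 / g by apply: divr_ge0 => //; exact: ltW.
have p2 : 0 <= 8 / c11 by apply: divr_ge0 => //; exact: ltW.
have K4 : 4 <= K by rewrite /K; lra.
have K0 : 0 < K by lra.
have gK : 6 <= g * K.
  have -> : g * K = 4 * g + g * (6 / g) + g * (8 / c11) by rewrite /K; ring.
  have : 0 <= g * (8 / c11) by apply: mulr_ge0 => //; exact: ltW.
  lra.
have cK : 8 <= c11 * K.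
  have -> : c11 * K = 4 * c11 + c11 * (6 / g) + c11 * (8 / c11) by rewrite /K; ring.
  have : 0 <= c11 * (6 / g) by apply: mulr_ge0 => //; exact: ltW.
  lra.
exists 1, (1/4), (K ^+ 5); split; first by split; [lra | lra | exact: exprn_gt0].
move=> eps M e0 eM d T P Phi hiid Phi0 htail hE n hn.
have M0 : 0 < M by apply: lt_le_trans eM; rewrite divr_gt0.
set a := eps * M.
have a1 : 1 <= a by move: eM; rewrite /a ler_pdivrMr // mulrC.
set u := a `^ (1/5).
set v := n%:R `^ (1/5).
have u0 : 0 <= u by exact: powR_ge0.
have v0 : 0 <= v by exact: powR_ge0.
have au : u ^+ 5 = a.
  rewrite /u powk; last lra.
  by rewrite divff ?powRr1 //; lra.
have nv : v ^+ 5 = n%:R.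
  by rewrite /v powk // divff ?powRr1.
have u1 : 1 <= u.
  by rewrite -(ler_pXn2r (_ : 0 < 5)%N) ?nnegrE // expr1n au.
have vKu : K * u <= v.
  have H5 : (K * u) ^+ 5 <= v ^+ 5.
    by rewrite nv exprMn au /a mulrA.
  move: H5; rewrite (ler_pXn2r (_ : 0 < 5)%N) // nnegrE; apply: mulr_ge0; lra.
set w := v / u.
have vw : v = w * u by rewrite /w divfK // gt_eqF; lra.
have Kw : K <= w by rewrite /w ler_pdivlMr //; lra.
set r := w ^+ 4.
have r0 : 0 <= r by apply: exprn_ge0; lra.
set N := (Num.trunc r).+1.
have [Nlo Nhi] : r <= N%:R /\ N%:R <= r + 1.
  have := truncn_itv r0; rewrite /N => /andP[lo hi]; split; first exact: ltW.
  by rewrite -natr1; lra.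
have w41 : K <= r.
  have w1 : 1 <= w by lra.
  have := @ler_eXnr _ w 4 isT w1; rewrite /r; lra.
have Npos : 0 < N%:R :> R by lra.
set h := c11 * (eps ^+ 2 / M) / 2.
have dl0 : 0 < eps ^+ 2 / M by apply: divr_gt0 => //; exact: exprn_gt0.
have h0 : 0 < h by rewrite /h; apply: divr_gt0 => //; exact: mulr_gt0.
set S := 4 * c11 * n%:R * (eps ^+ 2 / M).
have Nh0 : 0 < N%:R * h by exact: mulr_gt0.
set t := 1 / (2 * (N%:R * h)).
have t0 : 0 < t by rewrite /t divr_gt0 // mulr_gt0.
have tNh : t * (N%:R * h) = 1 / 2.
  by rewrite /t; field; rewrite (gt_eqF h0) (gt_eqF Npos).
have [mPhi indep ident] := hiid.
have mY' : forall i B, measurable B -> measurable (Phi i @^-1` B).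
  by move=> i B mB; have := mPhi i measurableT _ mB; rewrite setTI.
set E := [set x | (S <= \sum_(i < n) Phi i x)%R].
set G := \big[setI/setT]_(j <- index_iota 0 n) (Phi j @^-1` [set` `]-oo, N%:R * h]]).
set F := \big[setU/set0]_(j <- index_iota 0 n) (Phi j @^-1` [set` `]N%:R * h, +oo[]).
have mE : measurable E by exact: msum_ge.
have mG : measurable G by apply: mbigI => j; apply: mY'; exact: measurable_itv.
have mF : measurable F by apply: mbigU => j; apply: mY'; exact: measurable_itv.
have EGF : E `<=` (E `&` G) `|` F.
  move=> x Ex; have [Fx|nFx] := pselect (F x); [by right | left; split => //].
  apply/bigIP => j jn; rewrite /= in_itv /= leNgt; apply/negP => lt; apply: nFx.
  by apply/bigUP; exists j; split => //; rewrite /= in_itv /= lt.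
have H1 : (P E <= P (E `&` G) + P F)%E.
  apply: le_trans (measureU2 _ _ _); last exact: mF; last exact: measurableI.
  apply: le_measure => //; rewrite inE //.
  by apply: measurableU => //; exact: measurableI.
have H2 : (P (E `&` G) <= (expR (- (n%:R / N%:R)))%:E)%E.
  apply: le_trans (@chernoff_disc _ _ _ P Phi n N h S t hiid Phi0 h0 (ltW t0)) _.
  rewrite lee_fin.
  set Q := \sum_(k < N.+1) _.
  set m := c11 * eps ^+ 2 / M.
  have tle : t * (N%:R * h) <= 1 / 2 by rewrite tNh.
  have HQ : Q <= 1 + 2 * t * (h + m) := @mgf_bound _ _ _ P Phi N h t m hiid Phi0 h0 (ltW t0) tle hE.
  have Q0 : 0 <= Q.
    by apply: sumr_ge0 => k _; apply: mulr_ge0; [apply: fine_ge0; exact: measure_ge0 | exact: expR_ge0].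
  have m0 : 0 <= m by rewrite /m; apply: divr_ge0; [apply: mulr_ge0; [exact: ltW | exact: sqr_ge0] | exact: ltW].
  have x0 : 0 <= 2 * t * (h + m) by apply: mulr_ge0; [apply: mulr_ge0 => //; exact: ltW | lra].
  have HQn : Q ^+ n <= expR (2 * t * (h + m)) ^+ n.
    apply: lerXn2r; [by rewrite nnegrE | by rewrite nnegrE expR_ge0 |].
    apply: le_trans HQ _; exact: expR_ge1Dx.
  apply: le_trans (ler_wpM2l (expR_ge0 _) HQn) _.
  rewrite -expRM_natl -expRD ler_expR.
  have -> : - (t * S) + n%:R * (2 * t * (h + m)) = - (n%:R / N%:R).
    rewrite /t /S /h /m; field.
    by rewrite (gt_eqF hc11) (gt_eqF M0) (gt_eqF e0) (gt_eqF Npos).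
  by [].
have Nh4 : 4 * eps ^+ 2 / M <= N%:R * h.
  have : c11 * K <= c11 * N%:R by apply: ler_wpM2l; [exact: ltW | lra].
  move=> cN.
  have -> : 4 * eps ^+ 2 / M = 4 * (eps ^+ 2 / M) by rewrite mulrA.
  have -> : N%:R * h = (c11 * N%:R / 2) * (eps ^+ 2 / M) by rewrite /h; ring.
  by apply: ler_wpM2r; [exact: ltW | lra].
have H3 : (P F <= (n%:R * expR (- c' * M `^ (3 / 2) * Num.sqrt (N%:R * h)))%:E)%E.
  apply: le_trans (union_bound P _) _ => [j|]; first by apply: mY'; exact: measurable_itv.
  apply: (@le_trans _ _ (\sum_(j <- index_iota 0 n) (expR (- c' * M `^ (3 / 2) * Num.sqrt (N%:R * h)))%:E)%E).
    apply: lee_sum => j _; rewrite ident; last exact: measurable_itv.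
    have -> : Phi 0%N @^-1` [set` `]N%:R * h, +oo[] = [set x | N%:R * h < Phi 0%N x].
      by apply/seteqP; split => x /=; rewrite in_itv /= andbT.
    exact: htail.
  by rewrite sumEFin sumr_const_nat subn0 lee_fin (mulr_natl (expR _) n).
apply: le_trans H1 _; apply: le_trans (leeD H2 H3) _; rewrite -EFinD lee_fin.
have ident1 : M `^ (3/2) * Num.sqrt (N%:R * h) = a * Num.sqrt (N%:R * c11 / 2).
  have -> : (3/2 : R) = 1 + 2^-1 by field.
  rewrite powRD; last by rewrite (gt_eqF M0) implybT.
  rewrite powRr1; last exact: ltW.
  rewrite powR12_sqrt; last exact: ltW.
  rewrite -mulrA -sqrtrM; last exact: ltW.
  have -> : M * (N%:R * h) = eps ^+ 2 * (N%:R * c11 / 2).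
    by rewrite /h; field; rewrite gt_eqF.
  rewrite sqrtrM ?sqr_ge0 // sqrtr_sqr ger0_norm; last exact: ltW.
  by rewrite /a mulrA (mulrC M).
have ea : - c' * M `^ (3/2) * Num.sqrt (N%:R * h) = - (c' * (u ^+ 5 * Num.sqrt (N%:R * c11 / 2))).
  by rewrite -mulrA ident1 -au mulNr.
rewrite ea.
have a45 : a `^ (4/5) = u ^+ 4 by rewrite /u powk //; lra.
have n5 : n%:R = (w * u) ^+ 5 by rewrite -vw nv.
rewrite a45 vw n5.
apply: le_trans (@arith _ c' c11 hc' hc11 u w K N%:R K4 gK u1 Kw Nlo Nhi) _.
rewrite !mulrA; apply: ler_peMl; first exact: expR_ge0.
rewrite lerDl; apply: divr_ge0 => //; apply: mulr_ge0; exact: powR_ge0.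
Qed.
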